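(* Let ${\mathbf{X}}^{({\mathbf{A}})}_1,\dots,{\mathbf{X}}^{({\mathbf{A}})}_s,{\mathbf{X}}^{({\mathbf{B}})}_1,\dots,{\mathbf{X}}^{({\mathbf{B}})}_t\in\mathbb{R}^{m\times n}$, ${\mathbf{A}}_i\in\mathbb{R}^{k_i\times m}$ ($i=1,\dots,s$), ${\mathbf{B}}_j\in\mathbb{R}^{n\times \ell_j}$ ($j=1,\dots,t$), and consider $$F({\mathbf{U}},{\mathbf{V}})=\frac12\sum_{i=1}^s\|{\mathbf{A}}_i({\mathbf{X}}^{({\mathbf{A}})}_i-{\mathbf{U}}{\mathbf{V}}^T)\|_F^2+\frac12\sum_{j=1}^t\|({\mathbf{X}}^{({\mathbf{B}})}_j-{\mathbf{U}}{\mathbf{V}}^T){\mathbf{B}}_j\|_F^2$$ for ${\mathbf{U}}\in\mathbb{R}^{m\times r},{\mathbf{V}}\in\mathbb{R}^{n\times r}$. Suppose the six matrices ${\mathbf{U}}$, ${\mathbf{V}}$, $\sum_i{\mathbf{A}}_i^T{\mathbf{A}}_i$, $\sum_j{\mathbf{B}}_j{\mathbf{B}}_j^T$, $\sum_i{\mathbf{A}}_i^T{\mathbf{A}}_i{\mathbf{X}}^{({\mathbf{A}})}_i$, $\sum_j{\mathbf{X}}^{({\mathbf{B}})}_j{\mathbf{B}}_j{\mathbf{B}}_j^T$ are entrywise nonnegative, and that the denominators below are entrywise positive. Define $${\mathbf{U}}'={\mathbf{U}}\circ\frac{\sum_i{\mathbf{A}}_i^T{\mathbf{A}}_i{\mathbf{X}}^{({\mathbf{A}})}_i{\mathbf{V}}+\sum_j{\mathbf{X}}^{({\mathbf{B}})}_j{\mathbf{B}}_j{\mathbf{B}}_j^T{\mathbf{V}}}{\sum_i{\mathbf{A}}_i^T{\mathbf{A}}_i{\mathbf{U}}{\mathbf{V}}^T{\mathbf{V}}+\sum_j{\mathbf{U}}{\mathbf{V}}^T{\mathbf{B}}_j{\mathbf{B}}_j^T{\mathbf{V}}},\qquad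 {\mathbf{V}}'={\mathbf{V}}\circ\frac{\sum_i({\mathbf{X}}^{({\mathbf{A}})}_i)^T{\mathbf{A}}_i^T{\mathbf{A}}_i{\mathbf{U}}+\sum_j{\mathbf{B}}_j{\mathbf{B}}_j^T({\mathbf{X}}^{({\mathbf{B}})}_j)^T{\mathbf{U}}}{\sum_i{\mathbf{V}}{\mathbf{U}}^T{\mathbf{A}}_i^T{\mathbf{A}}_i{\mathbf{U}}+\sum_j{\mathbf{B}}_j{\mathbf{B}}_j^T{\mathbf{V}}{\mathbf{U}}^T{\mathbf{U}}}.$$ Then ${\mathbf{U}}'$ and ${\mathbf{V}}'$ are entrywise nonnegative, $F({\mathbf{U}}',{\mathbf{V}})\le F({\mathbf{U}},{\mathbf{V}})$ and $F({\mathbf{U}},{\mathbf{V}}')\le F({\mathbf{U}},{\mathbf{V}})$. In particular, $F$ is nonincreasing along the alternating iterations that apply these updates in turn.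
   Context: $\circ$ denotes entrywise (Hadamard) product and the fraction bar denotes entrywise division. $\|\cdot\|_F$ is the Frobenius norm. *)

(* Defs.v *)
From HB Require Import structures.
From mathcomp Require Import all_boot all_order all_algebra.
Set Implicit Arguments. Unset Strict Implicit. Unset Printing Implicit Defensive.
Import Order.TTheory GRing.Theory Num.Theory.
Local Open Scope ring_scope.

Definition hadamard (R : ringType) (m n : nat) (A B : 'M[R]_(m, n)) : 'M[R]_(m, n) :=
  \matrix_(i, j) (A i j * B i j).

Definition ediv (R : fieldType) (m n : nat) (A B : 'M[R]_(m, n)) : 'M[R]_(m, n) :=
  \matrix_(i, j) (A i j / B i j).

Definition mx_nonneg (R : numDomainType) (m n : nat) (A : 'M[R]_(m, n)) : Prop :=
  forall i j, 0 <= A i j.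
Definition mx_pos (R : numDomainType) (m n : nat) (A : 'M[R]_(m, n)) : Prop :=
  forall i j, 0 < A i j.

Definition frob (R : rcfType) (m n : nat) (A : 'M[R]_(m, n)) : R :=
  Num.sqrt (\sum_i \sum_j A i j ^+ 2).

Definition objF (R : rcfType) (m n r s t : nat) (k : 'I_s -> nat) (l : 'I_t -> nat)
  (XA : 'I_s -> 'M[R]_(m, n)) (XB : 'I_t -> 'M[R]_(m, n))
  (A : forall i : 'I_s, 'M[R]_(k i, m)) (B : forall j : 'I_t, 'M[R]_(n, l j))
  (U : 'M[R]_(m, r)) (V : 'M[R]_(n, r)) : R :=
  2^-1 * (\sum_(i < s) frob (A i *m (XA i - U *m V^T)) ^+ 2)
  + 2^-1 * (\sum_(j < t) frob ((XB j - U *m V^T) *m B j) ^+ 2).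

Definition numU (R : ringType) (m n r s t : nat) (k : 'I_s -> nat) (l : 'I_t -> nat)
  (XA : 'I_s -> 'M[R]_(m, n)) (XB : 'I_t -> 'M[R]_(m, n))
  (A : forall i : 'I_s, 'M[R]_(k i, m)) (B : forall j : 'I_t, 'M[R]_(n, l j))
  (U : 'M[R]_(m, r)) (V : 'M[R]_(n, r)) : 'M[R]_(m, r) :=
  \sum_(i < s) ((A i)^T *m A i *m XA i *m V)
  + \sum_(j < t) (XB j *m B j *m (B j)^T *m V).

Definition denU (R : ringType) (m n r s t : nat) (k : 'I_s -> nat) (l : 'I_t -> nat)
  (A : forall i : 'I_s, 'M[R]_(k i, m)) (B : forall j : 'I_t, 'M[R]_(n, l j))
  (U : 'M[R]_(m, r)) (V : 'M[R]_(n, r)) : 'M[R]_(m, r) :=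
  \sum_(i < s) ((A i)^T *m A i *m U *m V^T *m V)
  + \sum_(j < t) (U *m V^T *m B j *m (B j)^T *m V).

Definition numV (R : ringType) (m n r s t : nat) (k : 'I_s -> nat) (l : 'I_t -> nat)
  (XA : 'I_s -> 'M[R]_(m, n)) (XB : 'I_t -> 'M[R]_(m, n))
  (A : forall i : 'I_s, 'M[R]_(k i, m)) (B : forall j : 'I_t, 'M[R]_(n, l j))
  (U : 'M[R]_(m, r)) (V : 'M[R]_(n, r)) : 'M[R]_(n, r) :=
  \sum_(i < s) ((XA i)^T *m (A i)^T *m A i *m U)
  + \sum_(j < t) (B j *m (B j)^T *m (XB j)^T *m U).

Definition denV (R : ringType) (m n r s t : nat) (k : 'I_s -> nat) (l : 'I_t -> nat)
  (A : forall i : 'I_s, 'M[R]_(k i, m)) (B : forall j : 'I_t, 'M[R]_(n, l j))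
  (U : 'M[R]_(m, r)) (V : 'M[R]_(n, r)) : 'M[R]_(n, r) :=
  \sum_(i < s) (V *m U^T *m (A i)^T *m A i *m U)
  + \sum_(j < t) (B j *m (B j)^T *m V *m U^T *m U).

(* Main.v *)
Require Import Defs.
From HB Require Import structures.
From mathcomp Require Import all_boot all_order all_algebra.
From mathcomp Require Import ring lra.
Import Order.TTheory GRing.Theory Num.Theory.
Local Open Scope ring_scope.
Set Implicit Arguments. Unset Strict Implicit. Unset Printing Implicit Defensive.

Definition ip (R : rcfType) (m n : nat) (X Y : 'M[R]_(m, n)) : R := \tr (X^T *m Y).

Lemma ipE (R : rcfType) m n (X Y : 'M[R]_(m, n)) :
  ip X Y = \sum_i \sum_j X i j * Y i j.
Proof.
rewrite /ip /mxtrace exchange_big /=; apply: eq_bigr => j _.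
by rewrite !mxE; apply: eq_bigr => i _; rewrite !mxE.
Qed.

Lemma ipC (R : rcfType) m n (X Y : 'M[R]_(m, n)) : ip X Y = ip Y X.
Proof. by rewrite !ipE; apply: eq_bigr => i _; apply: eq_bigr => j _; rewrite mulrC. Qed.

Lemma ipDl (R : rcfType) m n (X Y Z : 'M[R]_(m, n)) : ip (X + Y) Z = ip X Z + ip Y Z.
Proof. by rewrite /ip linearD /= mulmxDl mxtraceD. Qed.

Lemma ipNl (R : rcfType) m n (X Z : 'M[R]_(m, n)) : ip (- X) Z = - ip X Z.
Proof. by rewrite /ip linearN /= mulNmx linearN. Qed.

Lemma ipBl (R : rcfType) m n (X Y Z : 'M[R]_(m, n)) : ip (X - Y) Z = ip X Z - ip Y Z.
Proof. by rewrite ipDl ipNl. Qed.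

Lemma ipBr (R : rcfType) m n (X Y Z : 'M[R]_(m, n)) : ip Z (X - Y) = ip Z X - ip Z Y.
Proof. by rewrite ipC ipBl ![ip _ Z]ipC. Qed.

Lemma ip_suml (R : rcfType) m n (I : finType) (F : I -> 'M[R]_(m, n)) Z :
  ip (\sum_i F i) Z = \sum_i ip (F i) Z.
Proof.
rewrite /ip linear_sum /= mulmx_suml linear_sum; done.
Qed.

Lemma ip_mull (R : rcfType) m n p (Ab : 'M[R]_(p, m)) (Y : 'M[R]_(m, n)) Z :
  ip (Ab *m Y) Z = ip Y (Ab^T *m Z).
Proof. by rewrite /ip trmx_mul mulmxA. Qed.

Lemma ip_mulr (R : rcfType) m n p (C : 'M[R]_(n, p)) (Y : 'M[R]_(m, n)) Z :
  ip (Y *m C) Z = ip Y (Z *m C^T).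
Proof. by rewrite /ip trmx_mul -mulmxA mxtrace_mulC mulmxA. Qed.

Lemma frob2 (R : rcfType) m n (M : 'M[R]_(m, n)) : frob M ^+ 2 = ip M M.
Proof.
rewrite /frob sqr_sqrtr ?ipE; last first.
  by apply: sumr_ge0 => i _; apply: sumr_ge0 => j _; apply: sqr_ge0.
by apply: eq_bigr => i _; apply: eq_bigr => j _; rewrite expr2.
Qed.

Lemma frob_tr (R : rcfType) m n (M : 'M[R]_(m, n)) : frob M^T = frob M.
Proof.
rewrite /frob exchange_big; congr Num.sqrt.
by apply: eq_bigr => i _; apply: eq_bigr => j _; rewrite mxE.
Qed.



Lemma eqle (R : rcfType) (x y : R) : x = y -> x <= y.
Proof. by move->. Qed.

Lemma quad_le (R : rcfType) (I : finType) (K : I -> I -> R) (u h : I -> R) :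
  (forall p q, K p q = K q p) -> (forall p q, 0 <= K p q) -> (forall p, 0 <= u p) ->
  \sum_p \sum_q K p q * (u q * h q) * (u p * h p)
  <= \sum_p (\sum_q K p q * u q) * u p * h p ^+ 2.
Proof.
move=> Ks K0 u0.
set T := \sum_p \sum_q K p q * u q * u p * h q ^+ 2.
have eT : T = \sum_p (\sum_q K p q * u q) * u p * h p ^+ 2.
  rewrite /T exchange_big /=; apply: eq_bigr => p _.
  rewrite !mulr_suml; apply: eq_bigr => q _; rewrite Ks; ring.
rewrite -eT.
have -> : T = 2^-1 * (\sum_p \sum_q (K p q * u q * u p * h q ^+ 2 + K p q * u q * u p * h p ^+ 2)).
  rewrite -[X in X * _]/(2^-1 : R).
  under eq_bigr do rewrite big_split /=.
  rewrite big_split /= -/T.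
  have -> : \sum_p \sum_q K p q * u q * u p * h p ^+ 2 = T.
    by rewrite eT; apply: eq_bigr => p _; rewrite !mulr_suml.
  lra.
rewrite mulr_sumr; apply: ler_sum => p _; rewrite mulr_sumr; apply: ler_sum => q _.
have k0 : 0 <= K p q * u q * u p by rewrite !mulr_ge0.
have : 0 <= K p q * u q * u p * (h q - h p) ^+ 2 by rewrite mulr_ge0 // sqr_ge0.
lra.
Qed.

Lemma mx3E (R : rcfType) m r (P : 'M[R]_m) (G : 'M[R]_r) (M : 'M[R]_(m, r)) a b :
  (P *m M *m G) a b = \sum_(q : 'I_m * 'I_r) P a q.1 * G q.2 b * M q.1 q.2.
Proof.
rewrite mxE; under eq_bigr do rewrite mxE big_distrl.
rewrite exchange_big pair_bigA /=; apply: eq_bigr => q _; ring.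
Qed.

Lemma quad_mx (R : rcfType) m r (P : 'M[R]_m) (G : 'M[R]_r) (U h : 'M[R]_(m, r)) :
  P^T = P -> G^T = G -> mx_nonneg P -> mx_nonneg G -> mx_nonneg U ->
  ip (P *m hadamard U h *m G) (hadamard U h)
  <= \sum_a \sum_b (P *m U *m G) a b * U a b * h a b ^+ 2.
Proof.
move=> Ps Gs P0 G0 U0.
rewrite ipE pair_bigA pair_bigA /=.
pose K (p q : 'I_m * 'I_r) := P p.1 q.1 * G q.2 p.2.
have H := @quad_le R _ K (fun p => U p.1 p.2) (fun p => h p.1 p.2).
apply: le_trans (le_trans (H _ _ _) _).
- apply: eqle; apply: eq_bigr => p _; rewrite mx3E big_distrl /=.
  by apply: eq_bigr => q _; rewrite /K !mxE.
- move=> p q; rewrite /K -{1}Ps -{1}Gs !mxE; ring.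
- by move=> p q; rewrite /K mulr_ge0.
- by move=> p.
apply: eqle; apply: eq_bigr => p _; rewrite mx3E /=.
by congr (_ * _ * _); apply: eq_bigr => q _; rewrite /K.
Qed.



Lemma ip_sq (R : rcfType) m n (M N : 'M[R]_(m, n)) :
  ip (M - N) (M - N) = ip M M - 2 * ip M N + ip N N.
Proof. rewrite !ipBl !ipBr (ipC N M); ring. Qed.

Lemma termA (R : rcfType) m n r p (Ai : 'M[R]_(p, m)) (X : 'M[R]_(m, n))
  (U D : 'M[R]_(m, r)) (V : 'M[R]_(n, r)) :
  frob (Ai *m (X - (U + D) *m V^T)) ^+ 2 =
  frob (Ai *m (X - U *m V^T)) ^+ 2 - 2 * ip (Ai^T *m Ai *m (X - U *m V^T) *m V) D
  + ip (Ai^T *m Ai *m D *m (V^T *m V)) D.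
Proof.
have -> : Ai *m (X - (U + D) *m V^T) = Ai *m (X - U *m V^T) - Ai *m D *m V^T.
  by rewrite mulmxDl opprD addrA mulmxDr mulmxN mulmxA.
have e1 : ip (Ai *m (X - U *m V^T)) (Ai *m D *m V^T) = ip (Ai^T *m Ai *m (X - U *m V^T) *m V) D.
  by rewrite ipC ip_mulr ip_mull trmxK ipC !mulmxA.
have e2 : ip (Ai *m D *m V^T) (Ai *m D *m V^T) = ip (Ai^T *m Ai *m D *m (V^T *m V)) D.
  by rewrite ip_mulr trmxK ip_mull ipC !mulmxA.
by rewrite !frob2 ip_sq e1 e2.
Qed.

Lemma termB (R : rcfType) m n r p (Bj : 'M[R]_(n, p)) (X : 'M[R]_(m, n))
  (U D : 'M[R]_(m, r)) (V : 'M[R]_(n, r)) :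
  frob ((X - (U + D) *m V^T) *m Bj) ^+ 2 =
  frob ((X - U *m V^T) *m Bj) ^+ 2 - 2 * ip ((X - U *m V^T) *m Bj *m Bj^T *m V) D
  + ip (D *m (V^T *m (Bj *m Bj^T) *m V)) D.
Proof.
have -> : (X - (U + D) *m V^T) *m Bj = (X - U *m V^T) *m Bj - D *m V^T *m Bj.
  by rewrite (mulmxDl U D) opprD addrA mulmxBl.
have e1 : ip ((X - U *m V^T) *m Bj) (D *m V^T *m Bj) = ip ((X - U *m V^T) *m Bj *m Bj^T *m V) D.
  by rewrite ipC ip_mulr ip_mulr trmxK ipC.
have e2 : ip (D *m V^T *m Bj) (D *m V^T *m Bj) = ip (D *m (V^T *m (Bj *m Bj^T) *m V)) D.
  by rewrite ip_mulr ip_mulr trmxK ipC !mulmxA.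
by rewrite !frob2 ip_sq e1 e2.
Qed.

Lemma expandU (R : rcfType) (m n r s t : nat)
  (k : 'I_s -> nat) (l : 'I_t -> nat)
  (XA : 'I_s -> 'M[R]_(m, n)) (XB : 'I_t -> 'M[R]_(m, n))
  (A : forall i : 'I_s, 'M[R]_(k i, m)) (B : forall j : 'I_t, 'M[R]_(n, l j))
  (U D : 'M[R]_(m, r)) (V : 'M[R]_(n, r)) :
  objF XA XB A B (U + D) V = objF XA XB A B U V
    - ip (numU XA XB A B U V - denU A B U V) D
    + 2^-1 * (ip ((\sum_(i < s) ((A i)^T *m A i)) *m D *m (V^T *m V)) D
              + ip (D *m (V^T *m (\sum_(j < t) (B j *m (B j)^T)) *m V)) D).
Proof.
rewrite /objF.
under eq_bigr do rewrite termA.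
under [X in _ + 2^-1 * X]eq_bigr do rewrite termB.
rewrite !big_split /= !sumrN -!mulr_sumr.
have eN : numU XA XB A B U V - denU A B U V =
  \sum_(i < s) ((A i)^T *m A i *m (XA i - U *m V^T) *m V)
  + \sum_(j < t) ((XB j - U *m V^T) *m B j *m (B j)^T *m V).
  rewrite /numU /denU opprD addrACA -!sumrB; congr (_ + _); apply: eq_bigr => i _.
    by rewrite mulmxBr mulmxBl !mulmxA.
    by rewrite !mulmxBl.
rewrite eN ipDl !ip_suml.
have eP : ip ((\sum_(i < s) ((A i)^T *m A i)) *m D *m (V^T *m V)) D =
   \sum_(i < s) ip ((A i)^T *m A i *m D *m (V^T *m V)) D.
  by rewrite !mulmx_suml ip_suml.
have eQ : ip (D *m (V^T *m (\sum_(j < t) (B j *m (B j)^T)) *m V)) D =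
   \sum_(j < t) ip (D *m (V^T *m (B j *m (B j)^T) *m V)) D.
  by rewrite mulmx_sumr mulmx_suml mulmx_sumr ip_suml.
by rewrite eP eQ; field.
Qed.



Lemma nn_mul (R : rcfType) m n p (X : 'M[R]_(m, n)) (Y : 'M[R]_(n, p)) :
  mx_nonneg X -> mx_nonneg Y -> mx_nonneg (X *m Y).
Proof. by move=> X0 Y0 i j; rewrite mxE; apply: sumr_ge0 => q _; rewrite mulr_ge0. Qed.

Lemma nn_tr (R : rcfType) m n (X : 'M[R]_(m, n)) : mx_nonneg X -> mx_nonneg X^T.
Proof. by move=> X0 i j; rewrite mxE. Qed.

Lemma nn_1 (R : rcfType) m : mx_nonneg (1%:M : 'M[R]_m).
Proof. by move=> i j; rewrite mxE ler0n. Qed.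

Lemma monoU (R : rcfType) (m n r s t : nat)
  (k : 'I_s -> nat) (l : 'I_t -> nat)
  (XA : 'I_s -> 'M[R]_(m, n)) (XB : 'I_t -> 'M[R]_(m, n))
  (A : forall i : 'I_s, 'M[R]_(k i, m)) (B : forall j : 'I_t, 'M[R]_(n, l j))
  (U : 'M[R]_(m, r)) (V : 'M[R]_(n, r)) :
  mx_nonneg U -> mx_nonneg V ->
  mx_nonneg (\sum_(i < s) ((A i)^T *m A i)) ->
  mx_nonneg (\sum_(j < t) (B j *m (B j)^T)) ->
  mx_pos (denU A B U V) ->
  objF XA XB A B (hadamard U (ediv (numU XA XB A B U V) (denU A B U V))) V
  <= objF XA XB A B U V.
Proof.
move=> U0 V0 P0 Q0 Dp.
set N := numU XA XB A B U V; set Dn := denU A B U V.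
set P := \sum_(i < s) ((A i)^T *m A i) in P0 *.
set Q := \sum_(j < t) (B j *m (B j)^T) in Q0 *.
pose h := \matrix_(a, b) ((N a b - Dn a b) / Dn a b).
pose D := hadamard U h.
have eU : hadamard U (ediv N Dn) = U + D.
  apply/matrixP => a b; have nz : Dn a b != 0 by rewrite gt_eqF // Dp.
  by move: nz; rewrite /D /hadamard /ediv !mxE => nz; field.
rewrite eU expandU -/N -/Dn -/P -/Q.
have Ps : P^T = P.
  by rewrite /P linear_sum; apply: eq_bigr => i _; rewrite /= trmx_mul trmxK.
have Qs : Q^T = Q.
  by rewrite /Q linear_sum; apply: eq_bigr => i _; rewrite /= trmx_mul trmxK.
have Gs : (V^T *m V)^T = V^T *m V by rewrite trmx_mul trmxK.
have Ws : (V^T *m Q *m V)^T = V^T *m Q *m V by rewrite !trmx_mul trmxK Qs mulmxA.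
have G0 : mx_nonneg (V^T *m V) by apply: nn_mul => //; apply: nn_tr.
have W0 : mx_nonneg (V^T *m Q *m V) by apply: nn_mul => //; apply: nn_mul => //; apply: nn_tr.
have k1 := quad_mx h Ps Gs P0 G0 U0.
have k2 := quad_mx h (@trmx1 R m) Ws (@nn_1 R m) W0 U0.
rewrite !mul1mx in k2.
have eDn : Dn = P *m U *m (V^T *m V) + U *m (V^T *m Q *m V).
  rewrite /Dn /denU /P /Q !mulmx_suml mulmx_sumr; congr (_ + _).
    by apply: eq_bigr => i _; rewrite !mulmxA.
  by rewrite mulmx_suml mulmx_sumr; apply: eq_bigr => i _; rewrite !mulmxA.
set S := \sum_a \sum_b Dn a b * U a b * h a b ^+ 2.
have eS : ip (N - Dn) D = S.
  rewrite ipE; apply: eq_bigr => a _; apply: eq_bigr => b _.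
  have nz : Dn a b != 0 by rewrite gt_eqF // Dp.
  by move: nz; rewrite /D /hadamard !mxE => nz; field.
have eS2 : S = \sum_a \sum_b (P *m U *m (V^T *m V)) a b * U a b * h a b ^+ 2
             + \sum_a \sum_b (U *m (V^T *m Q *m V)) a b * U a b * h a b ^+ 2.
  rewrite -big_split; apply: eq_bigr => a _; rewrite -big_split; apply: eq_bigr => b _.
  by rewrite eDn mxE !mulrDl.
have S0 : 0 <= S.
  apply: sumr_ge0 => a _; apply: sumr_ge0 => b _.
  by rewrite mulr_ge0 ?sqr_ge0 // mulr_ge0 // ltW.
rewrite eS; move: k1 k2; rewrite -/D; lra.
Qed.



Lemma objF_tr (R : rcfType) (m n r s t : nat)
  (k : 'I_s -> nat) (l : 'I_t -> nat)
  (XA : 'I_s -> 'M[R]_(m, n)) (XB : 'I_t -> 'M[R]_(m, n))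
  (A : forall i : 'I_s, 'M[R]_(k i, m)) (B : forall j : 'I_t, 'M[R]_(n, l j))
  (U : 'M[R]_(m, r)) (V : 'M[R]_(n, r)) :
  objF XA XB A B U V =
  objF (fun j => (XB j)^T) (fun i => (XA i)^T) (fun j => (B j)^T) (fun i => (A i)^T) V U.
Proof.
rewrite /objF addrC; congr (_ * _ + _ * _); apply: eq_bigr => i _.
  by rewrite -frob_tr trmx_mul linearB /= trmx_mul trmxK.
by rewrite -frob_tr trmx_mul linearB /= trmx_mul trmxK.
Qed.

Lemma nn_hd (R : rcfType) m n (U N D : 'M[R]_(m, n)) :
  mx_nonneg U -> mx_nonneg N -> mx_pos D -> mx_nonneg (hadamard U (ediv N D)).
Proof.
move=> U0 N0 D0 a b; rewrite /hadamard /ediv !mxE.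
by rewrite mulr_ge0 // divr_ge0 // ltW.
Qed.

Theorem mainTheorem7 (R : rcfType) (m n r s t : nat)
  (k : 'I_s -> nat) (l : 'I_t -> nat)
  (XA : 'I_s -> 'M[R]_(m, n)) (XB : 'I_t -> 'M[R]_(m, n))
  (A : forall i : 'I_s, 'M[R]_(k i, m)) (B : forall j : 'I_t, 'M[R]_(n, l j))
  (U : 'M[R]_(m, r)) (V : 'M[R]_(n, r)) :
  mx_nonneg U -> mx_nonneg V ->
  mx_nonneg (\sum_(i < s) ((A i)^T *m A i)) ->
  mx_nonneg (\sum_(j < t) (B j *m (B j)^T)) ->
  mx_nonneg (\sum_(i < s) ((A i)^T *m A i *m XA i)) ->
  mx_nonneg (\sum_(j < t) (XB j *m B j *m (B j)^T)) ->
  mx_pos (denU A B U V) -> mx_pos (denV A B U V) ->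
  let U' := hadamard U (ediv (numU XA XB A B U V) (denU A B U V)) in
  let V' := hadamard V (ediv (numV XA XB A B U V) (denV A B U V)) in
  [/\ mx_nonneg U', mx_nonneg V',
      objF XA XB A B U' V <= objF XA XB A B U V
    & objF XA XB A B U V' <= objF XA XB A B U V].
Proof.
move=> U0 V0 P0 Q0 S0 T0 DU DV U' V'.
have eNV : numV XA XB A B U V =
  numU (fun j => (XB j)^T) (fun i => (XA i)^T) (fun j => (B j)^T) (fun i => (A i)^T) V U.
  rewrite /numV /numU addrC; congr (_ + _); apply: eq_bigr => i _; by rewrite !trmxK.
have eDV : denV A B U V = denU (fun j => (B j)^T) (fun i => (A i)^T) V U.
  rewrite /denV /denU addrC; congr (_ + _); apply: eq_bigr => i _; by rewrite !trmxK.
split.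
- apply: nn_hd => //.
  have -> : numU XA XB A B U V = (\sum_(i < s) ((A i)^T *m A i *m XA i)) *m V
      + (\sum_(j < t) (XB j *m B j *m (B j)^T)) *m V by rewrite !mulmx_suml.
  by move=> a b; rewrite mxE addr_ge0 // nn_mul.
- apply: nn_hd => //.
  have -> : numV XA XB A B U V = (\sum_(i < s) ((A i)^T *m A i *m XA i))^T *m U
      + (\sum_(j < t) (XB j *m B j *m (B j)^T))^T *m U.
    rewrite /numV !linear_sum !mulmx_suml /=; congr (_ + _); apply: eq_bigr => i _.
      by rewrite !trmx_mul trmxK !mulmxA.
    by rewrite !trmx_mul trmxK !mulmxA.
  by move=> a b; rewrite mxE addr_ge0 // nn_mul //; exact: nn_tr.
- exact: monoU.
rewrite /V' eNV eDV [objF XA XB A B U V]objF_tr objF_tr.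
apply: monoU => //.
- have -> : \sum_(i < t) ((B i)^T)^T *m (B i)^T = \sum_(j < t) (B j *m (B j)^T).
    by apply: eq_bigr => i _; rewrite trmxK.
  done.
- have -> : \sum_(j < s) (A j)^T *m ((A j)^T)^T = \sum_(i < s) ((A i)^T *m A i).
    by apply: eq_bigr => i _; rewrite trmxK.
  done.
- by rewrite -eDV.
Qed.
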